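(* Let $r:\mathbb{R}\to\mathbb{R}$ and let $\pi^m(a)=\sum_{k=1}^Nw_k\pi^{c_k}(a)$ with $\pi^{c_k}(a)=\mathcal N(a;\mu_k,\sigma_k^2)$, parameters $\theta=(\mu_1,\sigma_1,\dots,\mu_N,\sigma_N,w_1,\dots,w_N)$. Let $\hat\partial^{LR}_{\vartheta}J(\pi^m)=\partial_\vartheta\log\pi^m(A)\,r(A)$ with $A\sim\pi^m$, and for a single component let $\hat\partial^{LR}_{\vartheta_k}J(\pi^{c_k})=\partial_{\vartheta_k}\log\pi^{c_k}(A)\,r(A)$. Let $\rho_k(A)=\pi^{c_k}(A)/\pi^m(A)$. Then for each $k$ and each $\vartheta_k\in\{\mu_k,\sigma_k\}$, $$\mathbb{V}_{\pi^m(A)}\big(\hat\partial^{LR}_{\vartheta_k}J(\pi^m)\big)=w_k^2\,\mathbb{V}_{\pi^m(A)}\big(\rho_k(A)\,\hat\partial^{LR}_{\vartheta_k}J(\pi^{c_k})\big),\qquad \mathbb{V}_{\pi^m(A)}\big(\hat\partial^{LR}_{w_k}J(\pi^m)\big)=\mathbb{V}_{\pi^m(A)}\big(\rho_k(A)r(A)\big).$$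
   Context: Bandit setting with objective $J(\pi)=\mathbb{E}_{a\sim\pi}[r(a)]$. $\mathcal N(a;\mu,\sigma^2)$ is the Gaussian density with mean $\mu$ and standard deviation $\sigma$. The weights $w_k$ are treated as free coordinates when differentiating. $\mathbb{V}_q$ denotes variance under $A\sim q$. *)

(* Defs.v *)
From HB Require Import structures.
From mathcomp Require Import all_boot all_order all_algebra.
From mathcomp Require Import all_classical all_reals all_analysis.
Set Implicit Arguments. Unset Strict Implicit. Unset Printing Implicit Defensive.
Import Order.TTheory GRing.Theory Num.Theory.
Local Open Scope ring_scope.

Section gmm.
Context {R : realType} {N : nat}.
Implicit Types (w mu sig : 'I_N -> R) (a t : R).

(* component density pi^{c_k}(a) = N(a; mu, sigma^2), sigma = standard deviation *)
Definition gauss (m s a : R) : R := normal_pdf m s a.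

Definition mixpdf w mu sig (a : R) : R := \sum_(k < N) w k * gauss (mu k) (sig k) a.

Definition upd (f : 'I_N -> R) (k : 'I_N) (t : R) : 'I_N -> R :=
  fun j => if j == k then t else f j.

Definition rho w mu sig (k : 'I_N) (a : R) : R :=
  gauss (mu k) (sig k) a / mixpdf w mu sig a.

Definition lr_mix_mu (r : R -> R) w mu sig k (a : R) : R :=
  derive1 (fun t => ln (mixpdf w (upd mu k t) sig a)) (mu k) * r a.
Definition lr_mix_sig (r : R -> R) w mu sig k (a : R) : R :=
  derive1 (fun t => ln (mixpdf w mu (upd sig k t) a)) (sig k) * r a.
Definition lr_mix_w (r : R -> R) w mu sig k (a : R) : R :=
  derive1 (fun t => ln (mixpdf (upd w k t) mu sig a)) (w k) * r a.

Definition lr_comp_mu (r : R -> R) mu sig k (a : R) : R :=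
  derive1 (fun t => ln (gauss t (sig k) a)) (mu k) * r a.
Definition lr_comp_sig (r : R -> R) mu sig k (a : R) : R :=
  derive1 (fun t => ln (gauss (mu k) t a)) (sig k) * r a.

End gmm.

Definition Eq {R : realType} (q X : R -> R) : \bar R :=
  (\int[@lebesgue_measure R]_x (X x * q x)%:E)%E.
Definition Vq {R : realType} (q X : R -> R) : \bar R :=
  (\int[@lebesgue_measure R]_x (((X x - fine (Eq q X)) ^+ 2) * q x)%:E)%E.

(* Main.v *)
Require Import Defs.
From HB Require Import structures.
From mathcomp Require Import all_boot all_order all_algebra.
From mathcomp Require Import all_classical all_reals all_analysis.
From mathcomp Require Import ring lra.
Import Order.TTheory GRing.Theory Num.Theory.
Local Open Scope ring_scope.

Section intZ.
Local Open Scope ereal_scope.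
Context d (T : measurableType d) (R : realType).
Variable mu : {measure set T -> \bar R}.
Import HBNNSimple.

Lemma NNZ (c : R) (f : T -> \bar R) : (0 < c)%R ->
 ereal_sup [set sintegral mu h | h in [set h : {nnsfun T >-> R} | forall x, (h x)%:E <= c%:E * f x]]
 = c%:E * ereal_sup [set sintegral mu h | h in [set h : {nnsfun T >-> R} | forall x, (h x)%:E <= f x]].
Proof.
move=> c0; rewrite -ereal_sup_pZl//; congr ereal_sup.
have ci0 : (0 <= c^-1)%R by rewrite invr_ge0 ltW.
apply/seteqP; split.
- move=> _ [h hle <-]; exists (sintegral mu (scale_nnsfun h ci0)).
    exists (scale_nnsfun h ci0) => // x /=.
    by rewrite -(@lee_pmul2l _ c%:E) ?lte_fin// -EFinM mulrA mulfV ?gt_eqF// mul1r; apply: hle.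
  idtac.
by rewrite -[X in _ * X = _]/(sintegral mu (cst c^-1 \* h)%R) sintegralrM muleA -EFinM divff ?gt_eqF// mul1e.
- move=> _ [_ [h hle <-] <-].
  exists (scale_nnsfun h (ltW c0)) => /=.
    by move=> x; rewrite EFinM lee_pmul2l ?lte_fin//; apply: hle.
  by rewrite -[X in X = _]/(sintegral mu (cst c \* h)%R) sintegralrM.
Qed.

Lemma muleBpos (c : R) (x y : \bar R) : (0 < c)%R -> 0 <= x -> 0 <= y ->
  c%:E * (x - y) = c%:E * x - c%:E * y.
Proof.
move=> c0; move: x y => [x| |] [y| |] x0 y0.
- by rewrite -!EFinM -EFinB mulrBr.
all: have cy : c%:E * +oo = +oo by rewrite mulry gtr0_sg// mul1e.
all: have cNy : c%:E * -oo = -oo by rewrite mulrNy gtr0_sg// mul1e.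
all: rewrite ?cy ?cNy //=; rewrite ?cy ?cNy //.

Qed.

Lemma integralZpos (D : set T) (c : R) (f : T -> \bar R) : (0 < c)%R ->
  \int[mu]_(x in D) (c%:E * f x) = c%:E * \int[mu]_(x in D) f x.
Proof.
move=> c0; rewrite /integral /=.
have Ep : ((fun x => c%:E * f x) \_ D)^\+ = fun x => c%:E * (f \_ D)^\+ x.
  apply/funext => x; rewrite !funeposE /patch; case: ifP => _ /=; last by rewrite (_ : point = 0) ?maxxx ?mule0.
  by rewrite maxe_pMr ?mule0 ?lee_fin ?ltW.
have En : ((fun x => c%:E * f x) \_ D)^\- = fun x => c%:E * (f \_ D)^\- x.
  apply/funext => x; rewrite !funenegE /patch; case: ifP => _ /=; last by rewrite oppr0 maxxx mule0.
  by rewrite -muleN maxe_pMr ?mule0 ?lee_fin ?ltW.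
rewrite Ep En !NNZ// muleBpos//.
  by apply: ereal_sup_ubound; exists nnsfun0; [move=> x /=; exact: funepos_ge0|exact: sintegral0].
by apply: ereal_sup_ubound; exists nnsfun0; [move=> x /=; exact: funeneg_ge0|exact: sintegral0].
Qed.
End intZ.

Section der.
Context {R : realType}.

Lemma derivable_comp1 (f g : R -> R) x : derivable f x 1 -> derivable g (f x) 1 ->
  derivable (g \o f) x 1.
Proof.
move=> /derivable1_diffP df /derivable1_diffP dg; apply/derivable1_diffP.
exact: differentiable_comp.
Qed.

Lemma ln_der (F : R -> R) x : derivable F x 1 -> 0 < F x ->
  derive1 (fun t => ln (F t)) x = derive1 F x / F x.
Proof.
move=> dF F0.
rewrite (_ : (fun t => ln (F t)) = (@ln R) \o F) // derive1_comp //; last first.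
  by apply: ex_derive; exact: is_derive1_ln.
rewrite derive1E; have [_ ->] := is_derive1_ln F0.
by rewrite mulrC.
Qed.

Lemma der_mu_g (m s a : R) : s != 0 -> derivable (fun t => gauss t s a) m 1.
Proof.
move=> s0; rewrite /gauss /normal_pdf (negbTE s0) /=.
have := @derivableM R R^o (cst (normal_peak s)) (fun t => normal_fun t s a) m 1 (derivable_cst _ _ _).
apply => //.
Qed.

Lemma der_sig_g (m s a : R) : 0 < s -> derivable (fun t => gauss m t a) s 1.
Proof.
move=> s0.
apply: (@near_eq_derivable _ _ _ (fun t => normal_peak t * normal_fun m t a)).
  near=> t; rewrite /gauss /normal_pdf gt_eqF //.
  near: t; exact: lt_nbhsr.
have dp : derivable (fun t : R => normal_peak t) s 1.
  rewrite /normal_peak.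
  apply: derivableV.
    by rewrite gt_eqF// sqrtr_gt0 mulrn_wgt0// mulr_gt0 ?pi_gt0// exprn_gt0.
  apply: (derivable_comp1 (fun t => t ^+ 2 * pi *+ 2) Num.sqrt) => //.
  apply: ex_derive; apply: is_derive1_sqrt.
  by rewrite mulrn_wgt0// mulr_gt0 ?pi_gt0// exprn_gt0.
have dn : derivable (fun t : R => normal_fun m t a) s 1.
  rewrite /normal_fun.
  apply: (derivable_comp1 (fun t => - (a - m) ^+ 2 / (t ^+ 2 *+ 2)) expR); last exact: derivable_expR.
  have := @derivableM R R^o (cst (- (a - m) ^+ 2)) (fun t => (t ^+ 2 *+ 2)^-1) s 1 (derivable_cst _ _ _).
  apply; apply: derivableV; first by rewrite gt_eqF// mulrn_wgt0// exprn_gt0.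
  rewrite (_ : (fun t : R => t ^+ 2 *+ 2) = (fun t => t ^+ 2) + (fun t => t ^+ 2)); last first.
    by apply/funext => t /=; rewrite mulr2n.
  by apply: derivableD; apply: exprn_derivable.
exact: (@derivableM R R^o (fun t => normal_peak t) (fun t => normal_fun m t a) s 1 dp dn).
Unshelve. all: by end_near.
Qed.

Lemma der_aff (C c : R) (G : R -> R) x : derivable G x 1 ->
  derivable (fun t => C + c * G t) x 1 /\ derive1 (fun t => C + c * G t) x = c * derive1 G x.
Proof.
move=> dG.
have dcG : derivable (fun t => c * G t) x 1.
  exact: (@derivableM R R^o (cst c) G x 1 (derivable_cst _ _ _) dG).
split.
  exact: (@derivableD R R^o R^o (cst C) (fun t => c * G t) x 1 (derivable_cst _ _ _) dcG).
rewrite derive1E -[LHS]/('D_1 (cst C + (fun t => c * G t)) x).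
rewrite (@deriveD R R^o R^o (cst C) (fun t => c * G t) x 1 (derivable_cst _ _ _) dcG).
by rewrite derive_cst add0r -derive1E derive1Ml.
Qed.

Lemma der_ln_aff (C c : R) (G : R -> R) x : derivable G x 1 -> 0 < C + c * G x ->
  derive1 (fun t => ln (C + c * G t)) x = c * derive1 G x / (C + c * G x).
Proof.
move=> dG p; have [d1 d2] := der_aff C c G x dG.
by rewrite (ln_der (fun t => C + c * G t) x d1 p) d2.
Qed.

End der.

Section var.
Context {R : realType}.
Local Open Scope ring_scope.

Lemma Vq_scale (q Y : R -> R) (c : R) : 0 <= c ->
  Vq q (fun a => c * Y a) = mule (c ^+ 2)%:E (Vq q Y).
Proof.
rewrite le_eqVlt => /predU1P[<-|c0].
  have E0 : Eq q (fun a => 0 * Y a) = 0%E.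
    rewrite /Eq (eq_integral (fun=> 0%E)) ?integral0// => x _.
    by rewrite mul0r mul0r.
  rewrite /Vq E0 /= expr0n /= mul0e.
  rewrite (eq_integral (fun=> 0%E)) ?integral0// => x _.
  by rewrite mul0r subr0 expr0n /= mul0r.
have E1 : Eq q (fun a => c * Y a) = mule c%:E (Eq q Y).
  rewrite /Eq -integralZpos//; apply: eq_integral => x _.
  by rewrite -EFinM mulrA.
have F1 : fine (Eq q (fun a => c * Y a)) = c * fine (Eq q Y).
  rewrite E1; case: (Eq q Y) => [e| |] /=; first by [].
    by rewrite mulry gtr0_sg// mul1e /= mulr0.
  by rewrite mulrNy gtr0_sg// mul1e /= mulr0.
rewrite /Vq F1 -integralZpos ?exprn_gt0//; apply: eq_integral => x _.
by rewrite -EFinM; congr (_%:E); ring.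
Qed.

End var.

Theorem lemmaC6 (R : realType) (N : nat) (r : R -> R)
  (w mu sig : 'I_N -> R) :
  measurable_fun [set: R] r ->
  (forall k, 0 < sig k) ->
  (forall k, 0 <= w k) -> \sum_(k < N) w k = 1 ->
  forall k : 'I_N,
    [/\ Vq (mixpdf w mu sig) (lr_mix_mu r w mu sig k)
          = mule (w k ^+ 2)%:E
             (Vq (mixpdf w mu sig)
                (fun a => rho w mu sig k a * lr_comp_mu r mu sig k a)),
        Vq (mixpdf w mu sig) (lr_mix_sig r w mu sig k)
          = mule (w k ^+ 2)%:E
             (Vq (mixpdf w mu sig)
                (fun a => rho w mu sig k a * lr_comp_sig r mu sig k a))
      & Vq (mixpdf w mu sig) (lr_mix_w r w mu sig k)
          = Vq (mixpdf w mu sig) (fun a => rho w mu sig k a * r a)].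
Proof.
move=> mr sig0 w0 w1 k.
have gpos : forall m s a : R, 0 < s -> 0 < gauss m s a.
  move=> m s a s0; rewrite /gauss /normal_pdf gt_eqF //=.
  apply: mulr_gt0; first by apply: normal_peak_gt0; rewrite gt_eqF.
  rewrite /normal_fun; exact: expR_gt0.
set C := fun a => \sum_(j < N | j != k) w j * gauss (mu j) (sig j) a.
have C0 : forall a, 0 <= C a.
  move=> a; apply: sumr_ge0 => j _; apply: mulr_ge0 => //; exact/ltW/gpos.
have qE : forall a, mixpdf w mu sig a = C a + w k * gauss (mu k) (sig k) a.
  by move=> a; rewrite /mixpdf (bigD1 k) //= addrC.
have emu : forall a t, mixpdf w (upd mu k t) sig a = C a + w k * gauss t (sig k) a.
  move=> a t; rewrite /mixpdf (bigD1 k) //= /upd eqxx addrC; congr (_ + _).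
  by apply: eq_bigr => j /negbTE ->.
have esig : forall a t, mixpdf w mu (upd sig k t) a = C a + w k * gauss (mu k) t a.
  move=> a t; rewrite /mixpdf (bigD1 k) //= /upd eqxx addrC; congr (_ + _).
  by apply: eq_bigr => j /negbTE ->.
have ew : forall a t, mixpdf (upd w k t) mu sig a = C a + gauss (mu k) (sig k) a * id t.
  move=> a t; rewrite /mixpdf (bigD1 k) //= /upd eqxx addrC mulrC; congr (_ + _).
  by apply: eq_bigr => j /negbTE ->.
have qpos : forall a, 0 < mixpdf w mu sig a.
  move=> a.
  have [j wj] : exists j, 0 < w j.
    apply/not_existsP => H.
    have : \sum_(j < N) w j = 0.
      apply: big1 => j _; apply/eqP; rewrite eq_le w0 andbT.
      by rewrite leNgt; apply/negP => /(H j).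
    by rewrite w1 => /eqP; rewrite oner_eq0.
  rewrite /mixpdf (bigD1 j) //=.
  have h1 : 0 < w j * gauss (mu j) (sig j) a by rewrite mulr_gt0 ?gpos.
  have h2 : 0 <= \sum_(i < N | i != j) w i * gauss (mu i) (sig i) a.
    apply: sumr_ge0 => i _; apply: mulr_ge0 => //; exact/ltW/gpos.
  lra.
have Pmu : lr_mix_mu r w mu sig k = fun a => w k * (rho w mu sig k a * lr_comp_mu r mu sig k a).
  apply/funext => a; rewrite /lr_mix_mu /lr_comp_mu /rho.
  rewrite (_ : (fun t => ln (mixpdf w (upd mu k t) sig a)) = (fun t => ln (C a + w k * (fun t => gauss t (sig k) a) t))); last first.
    by apply/funext => t; rewrite emu.
  have dG := der_mu_g (mu k) (sig k) a (lt0r_neq0 (sig0 k)).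
  rewrite (der_ln_aff (C a) (w k) (fun t => gauss t (sig k) a) (mu k) dG); last by rewrite -qE.
  rewrite (ln_der (fun t => gauss t (sig k) a) (mu k) dG (gpos _ _ _ (sig0 k))) -qE.
  have := gpos (mu k) (sig k) a (sig0 k); have := qpos a.
  set g := gauss _ _ _; set qq := mixpdf _ _ _ _ => q0 g0.
  by field; rewrite ?gt_eqF.
have Psig : lr_mix_sig r w mu sig k = fun a => w k * (rho w mu sig k a * lr_comp_sig r mu sig k a).
  apply/funext => a; rewrite /lr_mix_sig /lr_comp_sig /rho.
  rewrite (_ : (fun t => ln (mixpdf w mu (upd sig k t) a)) = (fun t => ln (C a + w k * (fun t => gauss (mu k) t a) t))); last first.
    by apply/funext => t; rewrite esig.
  have dG := der_sig_g (mu k) (sig k) a (sig0 k).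
  rewrite (der_ln_aff (C a) (w k) (fun t => gauss (mu k) t a) (sig k) dG); last by rewrite -qE.
  rewrite (ln_der (fun t => gauss (mu k) t a) (sig k) dG (gpos _ _ _ (sig0 k))) -qE.
  have := gpos (mu k) (sig k) a (sig0 k); have := qpos a.
  set g := gauss _ _ _; set qq := mixpdf _ _ _ _ => q0 g0.
  by field; rewrite ?gt_eqF.
have Pw : lr_mix_w r w mu sig k = fun a => rho w mu sig k a * r a.
  apply/funext => a; rewrite /lr_mix_w /rho.
  rewrite (_ : (fun t => ln (mixpdf (upd w k t) mu sig a)) = (fun t => ln (C a + gauss (mu k) (sig k) a * id t))); last first.
    by apply/funext => t; rewrite ew.
  rewrite (der_ln_aff (C a) (gauss (mu k) (sig k) a) id (w k) (@derivable_id R R^o (w k) 1)); last first.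
    by rewrite /= mulrC -qE.
  by rewrite derive1_id mulr1 [_ * w k]mulrC -qE.
split.
- by rewrite Pmu Vq_scale.
- by rewrite Psig Vq_scale.
- by rewrite Pw.
Qed.
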